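(* Let $N\ge1$, $T>0$, $M>0$, and let $\alpha\in\mathcal U_M$ be an optimal control for the problem of minimizing $\mathbb V(T)=\frac1N\sum_{i=1}^N\xi_i(T)^2$ over $\mathcal U_M$, where $\xi$ solves $\dot\xi_i=-\xi_i+(1-\alpha_i)\bar\xi$, $\bar\xi=\frac1N\sum_j\xi_j$, from a fixed initial datum $\xi(0)$ with $\bar\xi(0)>0$ and $\xi_1(0)\ge\dots\ge\xi_N(0)$. Let $\lambda=(\lambda_1,\dots,\lambda_N)$ be a covector associated with $\alpha$ by the Pontryagin maximum principle, i.e. $\dot\lambda_i=\frac1N\sum_{j}\alpha_j\lambda_j-\bar\lambda+\lambda_i$ with $\bar\lambda=\frac1N\sum_j\lambda_j$, $\lambda_i(T)=\frac2N\xi_i(T)$, and for almost every $t$, $\alpha(t)$ minimizes $a\mapsto -\bar\xi(t)\sum_i a_i\lambda_i(t)$ over $a\in[0,1]^N$ with $\sum_i a_i\le M$. Define $I_\lambda(t)=\{i:\lambda_i(t)\ge0\}$ and $I_\lambda^+(t)=\{i:\lambda_i(t)>0\}$. Then for almost every $t\in[0,T]$: if $I_\lambda(t)=\emptyset$, then $\alpha_i(t)=0$ for every $i$; if $I_\lambda^+(t)\neq\emptyset$, then there exists $i\in I_\lambda^+(t)$ with $\alpha_i(t)>0$, and $\sum_j\alpha_j(t)\ge\min(|I_\lambda^+(t)|,M)$.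
   Context: $\mathcal U_M$ is the set of measurable $\alpha:[0,T]\to[0,1]^N$ with $\sum_i\alpha_i(t)\le M$ for all $t$. The variables $\xi_i$ are the projections of the agents' velocities on the direction of the mean velocity in a collective migration model with target velocity $0$. $|\cdot|$ is cardinality. *)

(* Defs.v *)
From HB Require Import structures.
From mathcomp Require Import all_boot all_order all_algebra.
From mathcomp Require Import all_classical all_reals all_analysis.
Set Implicit Arguments. Unset Strict Implicit. Unset Printing Implicit Defensive.
Import Order.TTheory GRing.Theory Num.Theory.
Import numFieldNormedType.Exports.
Local Open Scope classical_set_scope.
Local Open Scope ring_scope.

Section Defs.
Variable R : realType.
Variable N : nat.

Definition mean (f : 'I_N -> R) : R := (\sum_(i < N) f i) / N%:R.

Definition admissible (M T : R) (alpha : 'I_N -> R -> R) : Prop :=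
  (forall i, measurable_fun (`[0, T]%classic) (alpha i)) /\
  (forall t, t \in `[0, T] ->
     (forall i, 0 <= alpha i t <= 1) /\ \sum_(i < N) alpha i t <= M).

(* xi is a (Caratheodory) solution on [0,T] of
   xi_i' = - xi_i + (1 - alpha_i) * mean xi, xi(0) = xi0. *)
Definition trajectory (T : R) (alpha : 'I_N -> R -> R) (xi0 : 'I_N -> R)
    (xi : 'I_N -> R -> R) : Prop :=
  forall i, {within `[0, T]%classic, continuous (xi i)} /\
   forall t, t \in `[0, T] ->
     xi i t = xi0 i + \int[(@lebesgue_measure R)]_(s in `[0, t]%classic)
                       (- xi i s + (1 - alpha i s) * mean (fun j => xi j s)).

Definition cost (T : R) (xi : 'I_N -> R -> R) : R :=
  mean (fun i => xi i T ^+ 2).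

(* lambda solves lambda_i' = (1/N) sum_j alpha_j lambda_j - mean lambda + lambda_i
   on [0,T], with lambda_i(T) = (2/N) xi_i(T). *)
Definition covector (T : R) (alpha xi lam : 'I_N -> R -> R) : Prop :=
  forall i, {within `[0, T]%classic, continuous (lam i)} /\
   lam i T = 2 / N%:R * xi i T /\
   forall t, t \in `[0, T] ->
     lam i t = lam i T - \int[(@lebesgue_measure R)]_(s in `[t, T]%classic)
        (mean (fun j => alpha j s * lam j s) - mean (fun j => lam j s) + lam i s).

Definition Ilam (lam : 'I_N -> R -> R) (t : R) : {set 'I_N} :=
  [set i | 0 <= lam i t]%SET.
Definition Ilamp (lam : 'I_N -> R -> R) (t : R) : {set 'I_N} :=
  [set i | 0 < lam i t]%SET.

End Defs.

(* Main.v *)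
Require Import Defs.
From HB Require Import structures.
From mathcomp Require Import all_boot all_order all_algebra.
From mathcomp Require Import all_classical all_reals all_analysis.
From mathcomp Require Import lra ring.
Import Order.TTheory GRing.Theory Num.Theory.
Import numFieldNormedType.Exports.
Local Open Scope ring_scope.

Section aux.
Local Open Scope classical_set_scope.
Local Open Scope ring_scope.
Variable R : realType.
Notation mu := (@lebesgue_measure R).

Lemma int_cst_oc (a b K : R) : a <= b ->
  mu.-integrable `]a, b] (EFin \o (fun _ => K)).
Proof.
move=> ab; apply: measurable_bounded_integrable => //.
- have := lebesgue_measure_itv `]a, b]; rewrite /= => ->.
  by case: ifP => _ //; rewrite ltry.
- exact: (@bounded_cst R R^o).
Qed.

Lemma Rint_cst_oc (a b K : R) : a <= b ->
  \int[mu]_(x in `]a, b]) K = K * (b - a).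
Proof.
move=> ab; rewrite Rintegral_cst//.
have := lebesgue_measure_itv `]a, b]; rewrite /= => ->.
rewrite lte_fin; move: ab; rewrite le_eqVlt => /orP[/eqP->|ab].
  by rewrite ltxx subrr mulr0.
by rewrite ab -EFinD.
Qed.

Lemma Rint_le_cst (a b K : R) (H : R -> R) : a <= b ->
  mu.-integrable `]a, b] (EFin \o H) ->
  (forall r, a < r <= b -> H r <= K) ->
  \int[mu]_(x in `]a, b]) H x <= K * (b - a).
Proof.
move=> ab iH HK; rewrite -Rint_cst_oc//.
apply: le_Rintegral => //; try exact: int_cst_oc.
all: try by move=> x /=; rewrite in_itv/= => /HK.
Qed.

Lemma Rint_ge_cst (a b K : R) (H : R -> R) : a <= b ->
  mu.-integrable `]a, b] (EFin \o H) ->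
  (forall r, a < r <= b -> K <= H r) ->
  K * (b - a) <= \int[mu]_(x in `]a, b]) H x.
Proof.
move=> ab iH HK; rewrite -Rint_cst_oc//.
apply: le_Rintegral => //; try exact: int_cst_oc.
all: try by move=> x /=; rewrite in_itv/= => /HK.
Qed.


Lemma sub_itv_cc (s t T : R) : 0 <= s -> t <= T -> `[s, t] `<=` `[0, T].
Proof.
move=> s0 tT x /=; rewrite !in_itv/= => /andP[sx xt].
by apply/andP; split; [exact: le_trans sx|exact: le_trans tT].
Qed.

Lemma aux1 (c x m : R) : 0 <= c <= 1 -> m <= x -> m <= 0 -> - c * x <= - m.
Proof. move=> /andP[c0 c1] mx m0; case: (leP 0 x) => x0; nra. Qed.

Lemma aux2 (c x M : R) : 0 <= c <= 1 -> x <= M -> 0 <= M -> - M <= - c * x.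
Proof. move=> /andP[c0 c1] mx m0; case: (leP 0 x) => x0; nra. Qed.

Lemma step_pos (T : R) (S H c : R -> R) :
  {within `[0, T], continuous S} ->
  mu.-integrable `[0, T] (EFin \o H) ->
  (forall t, 0 <= t <= T -> S t = S 0 + \int[mu]_(x in `[0, t]) H x) ->
  (forall r, 0 <= r <= T -> H r = - c r * S r) ->
  (forall r, 0 <= r <= T -> 0 <= c r <= 1) ->
  forall s t, 0 <= s -> s <= t -> t <= T -> t - s <= 1/2 -> 0 < S s -> 0 < S t.
Proof.
move=> cS iH SE HE cb s t s0 st tT ts Ss.
have diff : forall w, s <= w -> w <= T ->
    S w - S s = \int[mu]_(x in `]s, w]) H x.
  move=> w sw wT; rewrite (SE w) ?(le_trans s0 sw) ?wT// (SE s) ?s0 ?(le_trans sw wT)//.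
  rewrite opprD addrACA subrr add0r.
  have := @Rintegral_itvB R H (BLeft 0) (BRight w) s.
  apply.
  - apply: integrableS iH => //; exact: sub_itv_cc.
  - by rewrite bnd_simp.
  - by rewrite bnd_simp.
have iHoc : forall w, s <= w -> w <= T -> mu.-integrable `]s, w] (EFin \o H).
  move=> w sw wT; apply: integrableS iH => //.
  move=> x /=; rewrite !in_itv/= => /andP[sx xw].
  by rewrite (le_trans s0 (ltW sx)) (le_trans xw wT).
have cSst : {within `[s, t], continuous S}.
  by apply: (continuous_subspaceW _ cS); exact: sub_itv_cc.
have [u uin Su] := EVT_min st cSst.
have [v vin Sv] := EVT_max st cSst.
move: (uin) (vin); rewrite !in_itv/= => /andP[su ut] /andP[sv vt].
have inst : forall r, s < r -> r <= t -> [/\ S u <= S r, S r <= S v & 0 <= r <= T].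
  move=> r sr rt; have rin : r \in `[s, t] by rewrite in_itv/= (ltW sr) rt.
  split; [exact: Su|exact: Sv|].
  by rewrite (le_trans s0 (ltW sr)) (le_trans rt tT).
have Svpos : 0 < S v by apply: (lt_le_trans Ss); apply: Sv; rewrite in_itv/= lexx st.
have [Sup|] := ltP 0 (S u).
  by apply: (lt_le_trans Sup); apply: Su; rewrite in_itv/= st lexx.
move=> Su0; exfalso.
have h1 : S v - S s <= (- S u) * (v - s).
  rewrite diff ?(le_trans vt tT)//; apply: Rint_le_cst => //.
    exact: iHoc (le_trans vt tT).
  move=> r /andP[sr rv]; have [g1 g2 /cb g3] := inst r sr (le_trans rv vt).
  rewrite HE; last by rewrite (le_trans s0 (ltW sr)) (le_trans rv (le_trans vt tT)).
  exact: aux1.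
have h2 : (- S v) * (u - s) <= S u - S s.
  rewrite diff ?(le_trans ut tT)//; apply: Rint_ge_cst => //.
    exact: iHoc (le_trans ut tT).
  move=> r /andP[sr ru]; have [g1 g2 /cb g3] := inst r sr (le_trans ru ut).
  rewrite HE; last by rewrite (le_trans s0 (ltW sr)) (le_trans ru (le_trans ut tT)).
  by apply: aux2 => //; exact: ltW.
have h3 : (- S u) * (v - s) <= (- S u) * (1/2).
  apply: ler_wpM2l; [by rewrite oppr_ge0|lra].
have h4 : (- S v) * (1/2) <= (- S v) * (u - s).
  apply: ler_wnM2l; [by rewrite oppr_le0 ltW|lra].
lra.
Qed.

Lemma all_pos (T : R) (S H c : R -> R) :
  {within `[0, T], continuous S} ->
  mu.-integrable `[0, T] (EFin \o H) ->
  (forall t, 0 <= t <= T -> S t = S 0 + \int[mu]_(x in `[0, t]) H x) ->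
  (forall r, 0 <= r <= T -> H r = - c r * S r) ->
  (forall r, 0 <= r <= T -> 0 <= c r <= 1) ->
  0 < S 0 -> forall t, 0 <= t <= T -> 0 < S t.
Proof.
move=> cS iH SE HE cb S0 t /andP[t0 tT].
have key : forall k : nat, forall t, 0 <= t -> t <= T -> 2 * t <= k%:R -> 0 < S t.
  elim=> [|k IH] t' t'0 t'T.
    by move=> h; have -> : t' = 0 by lra.
  move=> h; have [hk|hk] := leP (2 * t') k%:R; first exact: IH.
  rewrite -[k.+1]addn1 natrD in h.
  have hs := step_pos T S H c cS iH SE HE cb (k%:R / 2) t'.
  have k0 : 0 <= k%:R :> R by exact: ler0n.
  apply: hs; try lra.
  apply: IH; lra.
have T0 : 0 <= 2 * T by lra.
have := archi_boundP T0 => hb.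
apply: (key _ t t0 tT).
by apply: le_trans (ltW hb); rewrite ler_pM2l.
Qed.

Lemma bounded01 (A : set R) (g : R -> R) :
  (forall x, A x -> 0 <= g x <= 1) -> [bounded g x | x in A].
Proof.
move=> hg; rewrite /bounded_near; near=> K => x Ax /=.
have /andP[g0 g1] := hg x Ax.
rewrite ger0_norm //; apply: (le_trans g1).
by near: K; apply: nbhs_pinfty_ge; rewrite num_real.
Unshelve. all: end_near. Qed.

Lemma within_cont_sum (A : set R) n (f : 'I_n -> R -> R) :
  (forall i, {within A, continuous (f i)}) ->
  {within A, continuous (fun x => \sum_(i < n) f i x)}.
Proof.
move=> hf.
suff : forall s : seq 'I_n, {within A, continuous (fun x => \sum_(i <- s) f i x)}.
  by apply.
elim=> [|i s IH].
  under eq_fun do rewrite big_nil.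
  move=> x; exact: cst_continuous.
under eq_fun do rewrite big_cons.
move=> x; apply: continuousD; [exact: hf|exact: IH].
Qed.

Lemma int_sum (I : interval R) n (f : 'I_n -> R -> R) :
  (forall i, mu.-integrable [set` I] (EFin \o f i)) ->
  mu.-integrable [set` I] (EFin \o (fun x => \sum_(i < n) f i x)).
Proof.
move=> hf; set D := [set` I].
have h : mu.-integrable D (fun x => \sum_(i <- index_enum 'I_n | xpredT i) (EFin \o f i) x).
  by apply: integrable_sum; [exact: measurable_itv| move=> i _; exact: hf].
move: h; apply: eq_integrable; first exact: measurable_itv.
by move=> x _ /=; rewrite sumEFin.
Qed.

Lemma Rintegral_sum (I : interval R) n (f : 'I_n -> R -> R) :
  (forall i, mu.-integrable [set` I] (EFin \o f i)) ->
  \int[mu]_(x in [set` I]) (\sum_(i < n) f i x) = \sum_(i < n) \int[mu]_(x in [set` I]) f i x.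
Proof.
move=> hf; set D := [set` I].
suff : forall s : seq 'I_n, \int[mu]_(x in D) (\sum_(i <- s) f i x) =
   \sum_(i <- s) \int[mu]_(x in D) f i x by apply.
have hs : forall s : seq 'I_n,
    mu.-integrable D (EFin \o (fun x => \sum_(i <- s) f i x)).
  move=> s.
  have h : mu.-integrable D (fun x => \sum_(i <- s | xpredT i) (EFin \o f i) x).
    by apply: integrable_sum; [exact: measurable_itv| move=> i _; exact: hf].
  move: h; apply: eq_integrable; first exact: measurable_itv.
  by move=> x _ /=; rewrite sumEFin.
elim=> [|i s IH].
  rewrite big_nil; under eq_Rintegral do rewrite big_nil.
  rewrite Rintegral_cst ?mul0r //; exact: measurable_itv.
rewrite big_cons -IH; under eq_Rintegral do rewrite big_cons.
rewrite RintegralD //; exact: measurable_itv.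
Qed.

End aux.

Section comb.
Variable R : realFieldType.
Variable N : nat.

Lemma sum_delta (q : 'I_N) (e : R) (f : 'I_N -> R) :
  \sum_(i < N) (if i == q then e else 0) * f i = e * f q.
Proof.
rewrite (bigD1 q)//= eqxx big1 ?addr0// => i /negbTE ->; by rewrite mul0r.
Qed.

Lemma sum_delta1 (q : 'I_N) (e : R) :
  \sum_(i < N) (if i == q then e else 0) = e.
Proof.
by rewrite (bigD1 q)//= eqxx big1 ?addr0// => i /negbTE ->.
Qed.

Lemma comb (M : R) (al lam : 'I_N -> R) : 0 < M ->
  (forall i, 0 <= al i <= 1) -> \sum_(i < N) al i <= M ->
  (forall a : 'I_N -> R, (forall i, 0 <= a i <= 1) -> \sum_(i < N) a i <= M ->
     \sum_(i < N) a i * lam i <= \sum_(i < N) al i * lam i) ->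
  ((forall i, lam i < 0) -> forall i, al i = 0) /\
  ((exists p, 0 < lam p) ->
     (exists2 i, 0 < lam i & 0 < al i) /\
     Num.min (#|[set i | 0 < lam i]|%:R) M <= \sum_(j < N) al j).
Proof.
move=> M0 alb alM opt; split.
  move=> neg k.
  have : 0 <= \sum_(i < N) al i * lam i.
    have /= h := opt (fun _ => 0).
    have s0 : \sum_(i < N) (0:R) = 0 by rewrite big1.
    have s1 : \sum_(i < N) 0 * lam i = 0 by rewrite big1 // => i _; rewrite mul0r.
    rewrite -{1}s1; apply: h => [i|]; [by rewrite lexx ler01 | by rewrite s0 ltW].
  rewrite (bigD1 k)//=.
  have : \sum_(i < N | i != k) al i * lam i <= 0.
    apply: sumr_le0 => i _; have := alb i; have := neg i; move=> /= ? /andP[? ?]; nra.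
  have := alb k; have := neg k; move=> ? /andP[? ?] ? ?; nra.
case=> p lp.
have existsi : exists2 i, 0 < lam i & 0 < al i.
  have [/existsP [i /andP[h1 h2]]|nex] := boolP [exists i, (0 < lam i) && (0 < al i)].
    by exists i.
  exfalso.
  have hle : \sum_(i < N) al i * lam i <= 0.
    apply: sumr_le0 => i _; have := alb i => /andP[a0 a1].
    have [li|li] := ltP 0 (lam i); last by nra.
    have : ~~ (0 < al i).
      apply/negP => ai; move/negP: nex; apply; apply/existsP; exists i.
      by rewrite li ai.
    rewrite -leNgt => ai; nra.
  set e := Num.min 1 M.
  have e0 : 0 < e by rewrite lt_min ltr01 M0.
  have e1 : e <= 1 by rewrite ge_min lexx.
  have eM : e <= M by rewrite ge_min lexx orbT.
  have := opt (fun i => if i == p then e else 0).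
  rewrite sum_delta sum_delta1 => h.
  have : e * lam p <= \sum_(i < N) al i * lam i.
    apply: h => // i; case: (i == p); rewrite ?lexx ?ler01 ?(ltW e0)//.
  nra.
split=> //.
rewrite leNgt; apply/negP => hlt.
set I := [set i | 0 < lam i].
have [q qI alq] : exists2 q, q \in I & al q < 1.
  have [/existsP [i /andP[h1 h2]]|nex] := boolP [exists i, (i \in I) && (al i < 1)].
    by exists i.
  exfalso.
  have h1 : #|I|%:R <= \sum_(i in I) al i.
    rewrite -sum1_card natr_sum; apply: ler_sum => i iI.
    rewrite leNgt; apply/negP => ai; move/negP: nex; apply; apply/existsP.
    by exists i; rewrite iI.
  have h2 : \sum_(i in I) al i <= \sum_(i < N) al i.
    rewrite [X in _ <= X](bigID (fun i => i \in I))/= lerDl.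
    by apply: sumr_ge0 => i _; case/andP: (alb i).
  have h3 : Num.min #|I|%:R M <= #|I|%:R by rewrite ge_min lexx.
  by have := lt_le_trans hlt (le_trans h3 (le_trans h1 h2)); rewrite ltxx.
have qlam : 0 < lam q by move: qI; rewrite inE.
have hslack : \sum_(j < N) al j < M by move: hlt; rewrite lt_min => /andP[].
set e := Num.min (1 - al q) (M - \sum_(j < N) al j).
have e0 : 0 < e by rewrite lt_min !subr_gt0 alq hslack.
have e1 : e <= 1 - al q by rewrite ge_min lexx.
have eM : e <= M - \sum_(j < N) al j by rewrite ge_min lexx orbT.
have /= h := opt (fun i => al i + if i == q then e else 0).
have E1 : \sum_(i < N) (al i + (if i == q then e else 0)) * lam i =
    \sum_(i < N) al i * lam i + e * lam q.
  by rewrite -sum_delta -big_split /=; apply: eq_bigr => i _; rewrite mulrDl.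
have E2 : \sum_(i < N) (al i + (if i == q then e else 0)) = \sum_(i < N) al i + e.
  by rewrite big_split sum_delta1.
rewrite E1 E2 in h.
have : \sum_(i < N) al i * lam i + e * lam q <= \sum_(i < N) al i * lam i.
  apply: h; last by lra.
  move=> i; case: eqP => [->|_]; last by rewrite addr0 alb.
  have := alb q => /andP[a0 a1].
  apply/andP; split; lra.
nra.
Qed.

End comb.

Theorem proposition4 (R : realType) (N : nat) (T M : R)
  (alpha xi lam : 'I_N -> R -> R) (xi0 : 'I_N -> R) :
  (0 < N)%N -> 0 < T -> 0 < M ->
  (* initial datum *)
  0 < mean xi0 ->
  (forall i j : 'I_N, (i <= j)%N -> xi0 j <= xi0 i) ->
  (* alpha is an optimal control, xi its trajectory *)
  admissible M T alpha ->
  trajectory T alpha xi0 xi ->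
  (forall (beta eta : 'I_N -> R -> R),
      admissible M T beta -> trajectory T beta xi0 eta ->
      cost T xi <= cost T eta) ->
  (* lambda is a PMP covector associated with alpha *)
  covector T alpha xi lam ->
  {ae (@lebesgue_measure R), forall t, `[0, T]%classic t ->
     forall a : 'I_N -> R, (forall i, 0 <= a i <= 1) -> \sum_(i < N) a i <= M ->
       - mean (fun j => xi j t) * (\sum_(i < N) alpha i t * lam i t)
         <= - mean (fun j => xi j t) * (\sum_(i < N) a i * lam i t)} ->
  {ae (@lebesgue_measure R), forall t, `[0, T]%classic t ->
     (Ilam lam t = finset.set0 -> forall i, alpha i t = 0) /\
     (Ilamp lam t != finset.set0 ->
        (exists2 i, i \in Ilamp lam t & 0 < alpha i t) /\
        Num.min (#|Ilamp lam t|%:R) M <= \sum_(j < N) alpha j t)}.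
Proof.
move=> N0 T0 M0 m0 _ [ames abnd] traj _ _ pmp.
set S := fun t => \sum_(i < N) xi i t.
have Npos : 0 < N%:R :> R by rewrite ltr0n.
have Spos : forall t, 0 <= t <= T -> 0 < S t.
  have cS : {within `[0, T]%classic, continuous S}%classic.
    exact: (@within_cont_sum R _ _ (fun i => xi i) (fun i => (traj i).1)).
  set m := fun s => mean (fun j => xi j s).
  have cm : {within `[0, T]%classic, continuous m}%classic.
    have -> : m = S \* cst (N%:R^-1) by apply/funext => s.
    move=> x; apply: continuousM; [exact: cS|exact: cst_continuous].
  have mint : (@lebesgue_measure R).-integrable `[0, T]%classic (EFin \o m).
    exact: continuous_compact_integrable (@segment_compact R 0 T) cm.
  have mT : measurable (`[0, T]%classic : set (measurableTypeR R)) by exact: measurable_itv.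
  set h := fun i s => - xi i s + (1 - alpha i s) * m s.
  have hint : forall i, (@lebesgue_measure R).-integrable `[0, T]%classic (EFin \o h i).
    move=> i.
    have xint : (@lebesgue_measure R).-integrable `[0, T]%classic (EFin \o xi i).
      exact: continuous_compact_integrable (@segment_compact R 0 T) (traj i).1.
    have p1 : (@lebesgue_measure R).-integrable `[0, T]%classic
        ((EFin \o (fun s => (1 - alpha i s)%R)) \* (EFin \o m))%E.
      have bd : forall x, `[0, T]%classic x -> 0 <= 1 - alpha i x <= 1.
        move=> x xin; have := (abnd x xin).1 i => /andP[a0 a1].
        apply/andP; split; lra.
      have ma0 := measurable_realfun.measurable_funB (measurable_cst (1:R)) (ames i).
      apply: integrableMr => //.
      exact (@bounded01 R _ _ bd).
    have p2 := integrableD mT (integrableN xint) p1.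
    by apply: eq_integrable p2 => // x _ /=.
  have Hint := @int_sum R `[0, T] N h hint.
  have xE : forall i t, 0 <= t <= T ->
      xi i t = xi0 i + \int[lebesgue_measure]_(x in `[0, t]%classic) h i x.
    by move=> i t tb; rewrite ((traj i).2 t) ?in_itv.
  have x0E : forall i, xi i 0 = xi0 i.
    move=> i; rewrite (xE i 0) ?lexx ?(ltW T0) //.
    by rewrite set_itv1 Rintegral_set1 addr0.
  have S0E : S 0 = \sum_(i < N) xi0 i by apply: eq_bigr => i _; exact: x0E.
  have SE : forall t, 0 <= t <= T ->
      S t = S 0 + \int[lebesgue_measure]_(x in `[0, t]%classic) (\sum_(i < N) h i x).
    move=> t /andP[t0 tT].
    rewrite S0E (@Rintegral_sum R `[0, t] N h); last first.
      move=> i; apply: integrableS (hint i) => //.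
      by move=> x /=; rewrite !in_itv/= => /andP[-> /le_trans]; apply.
    rewrite -big_split /=; apply: eq_bigr => i _; apply: xE.
    by rewrite t0 tT.
  set c := fun r => (\sum_(i < N) alpha i r) / N%:R.
  have HE : forall r, 0 <= r <= T -> \sum_(i < N) h i r = - c r * S r.
    move=> r _.
    have e1 : \sum_(i < N) (1 - alpha i r) = N%:R - \sum_(i < N) alpha i r.
      by rewrite sumrB sumr_const card_ord.
    rewrite /h big_split /= sumrN -mulr_suml e1 /m /mean /c /S.
    field; exact: lt0r_neq0.
  have cb : forall r, 0 <= r <= T -> 0 <= c r <= 1.
    move=> r rb; have rin : r \in `[0, T] by rewrite in_itv.
    have [alb _] := abnd r rin.
    have s0 : 0 <= \sum_(i < N) alpha i r.
      by apply: sumr_ge0 => i _; case/andP: (alb i).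
    have s1 : \sum_(i < N) alpha i r <= N%:R.
      have : \sum_(i < N) alpha i r <= \sum_(i < N) (1:R).
        by apply: ler_sum => i _; case/andP: (alb i).
      by rewrite sumr_const card_ord.
    by rewrite /c divr_ge0 ?ler0n //= ler_pdivrMr // mul1r.
  have S0 : 0 < S 0.
    rewrite S0E; have : \sum_(i < N) xi0 i = mean xi0 * N%:R.
      by rewrite /mean divfK // lt0r_neq0.
    by move=> ->; apply: mulr_gt0.
  exact: (@all_pos R T S (fun x => \sum_(i < N) h i x) c cS Hint SE HE cb S0).
move: pmp; apply: negligibleS => t /= nQ Pt; apply: nQ => /= tin.
have {Pt} Ht := Pt tin.
have tb : 0 <= t <= T by move: tin => /=; rewrite in_itv.
have tin' : t \in `[0, T] by rewrite in_itv.
have [alb alM] := abnd t tin'.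
have mpos : 0 < mean (fun j => xi j t) by rewrite /mean; apply: divr_gt0 => //; exact: Spos.
have opt : forall a : 'I_N -> R, (forall i, 0 <= a i <= 1) -> \sum_(i < N) a i <= M ->
    \sum_(i < N) a i * lam i t <= \sum_(i < N) alpha i t * lam i t.
  by move=> a ab aM; have := Ht a ab aM; rewrite ler_nM2l // oppr_lt0.
have [c1 c2] := @comb R N M (fun i => alpha i t) (fun i => lam i t) M0 alb alM opt.
split.
  move=> E i; apply: c1 => j.
  have : j \notin Ilam lam t by rewrite E inE.
  by rewrite /Ilam inE -ltNge.
move=> /set0Pn [p pin].
have [[i ii ai] hmin] : (exists2 i, 0 < lam i t & 0 < alpha i t) /\
    Num.min (#|[set i | 0 < lam i t]|%:R) M <= \sum_(j < N) alpha j t.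
  by apply: c2; exists p; move: pin; rewrite /Ilamp inE.
split; first by exists i => //; rewrite /Ilamp inE.
exact: hmin.
Qed.
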